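(* Let $G=(B\cup W,E)$ be a bipartite graph that admits a BW-automorphism. Then, as an instance of Bipartite Influence, $G=0$; in particular $Ls(G)=Rs(G)=0$.
   Context: Bipartite Influence: played on a bipartite graph $G=(B\cup W,E)$ with black vertices $B$ and white vertices $W$, edges between $B$ and $W$. Isolated vertices are credited to the owner of their colour (black to Left, white to Right). On her turn Left picks a black vertex $x$ and removes $x$, its neighbours, and the vertices that thereby become isolated (credited to her); Right does the same with white vertices. Score = Left's removed/credited vertices minus Right's. $Ls(G)$, $Rs(G)$ are the optimal scores when Left, resp. Right, moves first. The disjoint union of positions is their disjunctive sum; $G=0$ means $Ls(G+H)=Ls(H)$ and $Rs(G+H)=Rs(H)$ for every Bipartite Influence position (more generally every dicotic nonzugzwang scoring game) $H$. A BW-automorphism of $G$ is a graph automorphism $\varphi$ of $G$ that is involutive ($\varphi(\varphi(u))=u$ for all $u$), maps black vertices to white vertices and white to black, and satisfies $d(v,\varphi(v))\geq 3$ for every vertex $v$, where $d$ is the shortest-path distance ($d=\infty$ between different connected components). *)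

(* Defs.v *)
From mathcomp Require Import all_boot all_order all_algebra.
Set Implicit Arguments. Unset Strict Implicit. Unset Printing Implicit Defensive.
Import Order.TTheory GRing.Theory Num.Theory.
Local Open Scope ring_scope.

(* A bipartite graph: a finite vertex type [V], a colouring [black]
   (true = black vertex, in B; false = white vertex, in W), and an
   adjacency relation [adj] that is symmetric, irreflexive and only joins
   vertices of different colours. *)
Definition is_bigraph (V : finType) (black : V -> bool) (adj : rel V) : Prop :=
  symmetric adj /\ irreflexive adj /\ (forall u v, adj u v -> black u != black v).

(* Positions of Bipartite Influence reachable from G are induced subgraphs,
   given by the set S of remaining vertices. *)
Definition nbrs (V : finType) (adj : rel V) (S : {set V}) (x : V) : {set V} :=
  [set y in S | adj x y].
Definition closed_nbhd (V : finType) (adj : rel V) (S : {set V}) (x : V) : {set V} :=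
  x |: nbrs adj S x.
Definition isolated (V : finType) (adj : rel V) (S : {set V}) : {set V} :=
  [set v in S | nbrs adj S v == set0].
Definition core (V : finType) (adj : rel V) (S : {set V}) : {set V} :=
  S :\: isolated adj S.
(* isolated vertices are credited to the owner of their colour *)
Definition credit (V : finType) (black : V -> bool) (adj : rel V) (S : {set V}) : int :=
  (#|[set v in isolated adj S | black v]|%N)%:Z - (#|[set v in isolated adj S | ~~ black v]|%N)%:Z.

(* max / min of a list of scores (0 on the empty list: no move, game over) *)
Definition seqmax (s : seq int) : int := if s is a :: t then foldr Num.max a t else 0.
Definition seqmin (s : seq int) : int := if s is a :: t then foldr Num.min a t else 0.

(* Optimal score (Left's points minus Right's) of the induced position S,
   with the given player to move, computed with fuel n (n >= #|S| suffices,
   since every move removes at least one vertex).  Isolated vertices of S are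
   credited first; then the player to move picks a vertex x of her colour in
   the non-isolated part C and removes N[x] (scoring its size); the vertices
   that thereby become isolated are credited in the recursive call (they all
   have the colour of the mover). *)
Fixpoint bi_value (V : finType) (black : V -> bool) (adj : rel V)
    (n : nat) (leftToMove : bool) (S : {set V}) : int :=
  credit black adj S +
  match n with
  | 0 => 0
  | n'.+1 =>
    let C := core adj S in
    if leftToMove then
      seqmax [seq (#|closed_nbhd adj C x|%N)%:Z
                  + bi_value black adj n' false (C :\: closed_nbhd adj C x)
             | x <- enum [set x in C | black x]]
    else
      seqmin [seq - (#|closed_nbhd adj C y|%N)%:Z
                  + bi_value black adj n' true (C :\: closed_nbhd adj C y)
             | y <- enum [set y in C | ~~ black y]]
  end.

Definition Ls (V : finType) (black : V -> bool) (adj : rel V) : int :=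
  bi_value black adj #|V|%N true setT.
Definition Rs (V : finType) (black : V -> bool) (adj : rel V) : int :=
  bi_value black adj #|V|%N false setT.

Definition sum_black (V V' : finType) (black : V -> bool) (black' : V' -> bool)
  (z : V + V') : bool :=
  match z with inl v => black v | inr v => black' v end.
Definition sum_adj (V V' : finType) (adj : rel V) (adj' : rel V') : rel (V + V') :=
  fun z w => match z, w with
             | inl u, inl v => adj u v
             | inr u, inr v => adj' u v
             | _, _ => false
             end.

Definition is_zero (V : finType) (black : V -> bool) (adj : rel V) : Prop :=
  forall (V' : finType) (black' : V' -> bool) (adj' : rel V'),
    is_bigraph black' adj' ->
    Ls (sum_black black black') (sum_adj adj adj') = Ls black' adj' /\
    Rs (sum_black black black') (sum_adj adj adj') = Rs black' adj'.

(* d(u,v) >= 3 in the shortest-path distance: no walk of length 0, 1 or 2 *)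
Definition dist_ge3 (V : finType) (adj : rel V) (u v : V) : Prop :=
  u != v /\ ~~ adj u v /\ ~~ [exists w, adj u w && adj w v].

Definition BW_automorphism (V : finType) (black : V -> bool) (adj : rel V)
    (phi : V -> V) : Prop :=
  (forall u v, adj (phi u) (phi v) = adj u v) /\
  involutive phi /\
  (forall v, black (phi v) = ~~ black v) /\
  (forall v, dist_ge3 adj v (phi v)).

(* Main.v *)
Require Import Defs.
From mathcomp Require Import all_boot all_order all_algebra.
From mathcomp Require Import zify.
Set Implicit Arguments. Unset Strict Implicit. Unset Printing Implicit Defensive.
Import Order.TTheory GRing.Theory Num.Theory.
Local Open Scope ring_scope.


Ltac slia := repeat match goal with H : ?P |- _ =>
  lazymatch type of P with Prop => clear H end end; lia.

Lemma foldr_max_ub (a : int) t z : z \in a :: t -> z <= foldr Num.max a t.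
Proof.
elim: t z => [|c t IH] z /=; first by rewrite inE => /eqP ->.
rewrite !inE le_max => /or3P [/eqP->|/eqP->|h].
- by rewrite orbC IH // inE eqxx.
- by rewrite lexx.
- by rewrite orbC IH // inE h orbT.
Qed.

Lemma foldr_max_mem (a : int) t : foldr Num.max a t \in a :: t.
Proof.
elim: t => [|c t IH] /=; first by rewrite inE.
rewrite maxEle; case: ifP => _; last by rewrite !inE eqxx orbT.
move: IH; rewrite !inE => /orP [->|->] //; by rewrite !orbT.
Qed.

Lemma foldr_min_lb (a : int) t z : z \in a :: t -> foldr Num.min a t <= z.
Proof.
elim: t z => [|c t IH] z /=; first by rewrite inE => /eqP ->.
rewrite !inE ge_min => /or3P [/eqP->|/eqP->|h].
- by rewrite orbC IH // inE eqxx.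
- by rewrite lexx.
- by rewrite orbC IH // inE h orbT.
Qed.

Lemma foldr_min_mem (a : int) t : foldr Num.min a t \in a :: t.
Proof.
elim: t => [|c t IH] /=; first by rewrite inE.
rewrite minEle; case: ifP => _; first by rewrite !inE eqxx orbT.
move: IH; rewrite !inE => /orP [->|->] //; by rewrite !orbT.
Qed.

Lemma seqmax_ub (s : seq int) z : z \in s -> z <= seqmax s.
Proof. by case: s => [|a t] //; apply: foldr_max_ub. Qed.

Lemma seqmax_mem (s : seq int) : s != [::] -> seqmax s \in s.
Proof. by case: s => [|a t] // _; apply: foldr_max_mem. Qed.

Lemma seqmin_lb (s : seq int) z : z \in s -> seqmin s <= z.
Proof. by case: s => [|a t] //; apply: foldr_min_lb. Qed.

Lemma seqmin_mem (s : seq int) : s != [::] -> seqmin s \in s.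
Proof. by case: s => [|a t] // _; apply: foldr_min_mem. Qed.

Lemma seqmax_le (s : seq int) c : s != [::] -> (forall z, z \in s -> z <= c) -> seqmax s <= c.
Proof. by move=> /seqmax_mem h H; apply: H. Qed.

Lemma seqmin_ge (s : seq int) c : s != [::] -> (forall z, z \in s -> c <= z) -> c <= seqmin s.
Proof. by move=> /seqmin_mem h H; apply: H. Qed.

Lemma seqmax_opp (s : seq int) : seqmax [seq - z | z <- s] = - seqmin s.
Proof.
case: s => [|a t] /=; first by rewrite oppr0.
elim: t => [|c t IH] //=. by rewrite IH oppr_min.
Qed.

Lemma seqmin_opp (s : seq int) : seqmin [seq - z | z <- s] = - seqmax s.
Proof.
case: s => [|a t] /=; first by rewrite oppr0.
elim: t => [|c t IH] //=. by rewrite IH oppr_max.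
Qed.


Section Game.
Variables (T : finType) (black : T -> bool) (adj : rel T).

Definition gval b (S : {set T}) : int := bi_value black adj #|T| b S.
Definition mvL (C : {set T}) x : int :=
  (#|closed_nbhd adj C x|%N)%:Z + gval false (C :\: closed_nbhd adj C x).
Definition mvR (C : {set T}) y : int :=
  - (#|closed_nbhd adj C y|%N)%:Z + gval true (C :\: closed_nbhd adj C y).
Definition Fv b (C : {set T}) : int :=
  if b then seqmax [seq mvL C x | x <- enum [set x in C | black x]]
  else seqmin [seq mvR C y | y <- enum [set y in C | ~~ black y]].
Definition sg (I : {set T}) : int := \sum_(v in I) (if black v then 1 else -1).

Lemma in_N (C : {set T}) x y : (y \in closed_nbhd adj C x) = (y == x) || ((y \in C) && adj x y).
Proof. by rewrite /closed_nbhd /nbrs !inE. Qed.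

Lemma N_self (C : {set T}) x : x \in closed_nbhd adj C x.
Proof. by rewrite in_N eqxx. Qed.

Lemma card_rm (C S : {set T}) x : x \in C -> C \subset S -> (#|C :\: closed_nbhd adj C x| < #|S|)%N.
Proof.
move=> xC CS; apply: proper_card; rewrite properE; apply/andP; split.
  exact: subset_trans (subsetDl _ _) CS.
apply/subsetPn; exists x; first exact: (subsetP CS).
by rewrite inE N_self.
Qed.

Lemma fuel_indep n m b (S : {set T}) : (#|S| <= n)%N -> (#|S| <= m)%N ->
  bi_value black adj n b S = bi_value black adj m b S.
Proof.
have E0 : forall p : pred T, [set x in core adj set0 | p x] = set0.
  by move=> p; apply/setP => x; rewrite !inE.
elim: n m b S => [|n IH] [|m] b S hn hm //=.
- have -> : S = set0 by apply/eqP; rewrite -cards_eq0; lia.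
  by rewrite !E0 !enum_set0; case: b.
- have -> : S = set0 by apply/eqP; rewrite -cards_eq0; lia.
  by rewrite !E0 !enum_set0; case: b.
- congr (_ + _); case: b.
  + congr seqmax; apply/eq_in_map => x; rewrite mem_enum inE => /andP [xC _].
    congr (_ + _); apply: IH.
    * have := card_rm xC (subset_trans (subsetDl _ _) (subxx S)) ; rewrite /core.
      have := card_rm xC (subsetDl S (isolated adj S)); lia.
    * have := card_rm xC (subsetDl S (isolated adj S)); lia.
  + congr seqmin; apply/eq_in_map => x; rewrite mem_enum inE => /andP [xC _].
    congr (_ + _); apply: IH.
    * have := card_rm xC (subsetDl S (isolated adj S)); lia.
    * have := card_rm xC (subsetDl S (isolated adj S)); lia.
Qed.

Lemma val_unfold b (S : {set T}) : gval b S = credit black adj S + Fv b (core adj S).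
Proof.
rewrite /gval /Fv; case E: #|T| => [|k] /=.
  have A0 : forall A : {set T}, A = set0.
    by move=> A; apply/eqP; rewrite -cards_eq0; have := max_card A; lia.
  rewrite (A0 [set x in core adj S | black x]) (A0 [set x in core adj S | ~~ black x]).
  by rewrite !enum_set0; case: b.
congr (_ + _); case: b.
- congr seqmax; apply/eq_in_map => x; rewrite mem_enum inE => /andP [xC _].
  rewrite /mvL /gval; congr (_ + _); apply: fuel_indep; last exact: max_card.
  have := card_rm xC (subset_trans (subsetDl _ _) (subsetT S)); rewrite cardsT; lia.
- congr seqmin; apply/eq_in_map => x; rewrite mem_enum inE => /andP [xC _].
  rewrite /mvR /gval; congr (_ + _); apply: fuel_indep; last exact: max_card.
  have := card_rm xC (subset_trans (subsetDl _ _) (subsetT S)); rewrite cardsT; lia.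
Qed.


Lemma isoP (S : {set T}) v :
  reflect (v \in S /\ forall y, y \in S -> ~~ adj v y) (v \in isolated adj S).
Proof.
rewrite /isolated inE; apply: (iffP andP) => [[vS /eqP h]|[vS h]]; split => //.
  move=> y yS; apply/negP => a.
  have : y \in nbrs adj S v by rewrite inE yS a.
  by rewrite h inE.
apply/eqP/setP => y; rewrite !inE; case yS: (y \in S) => //=; exact/negbTE/h.
Qed.

Lemma coreP (S : {set T}) v :
  reflect (v \in S /\ exists2 y, y \in S & adj v y) (v \in core adj S).
Proof.
rewrite /core inE; apply: (iffP andP) => [[ni vS]|[vS [y yS a]]]; split => //.
  have [/existsP [y /andP [yS a]]|/existsPn h] :=
    boolP [exists y, (y \in S) && adj v y]; first by exists y.
  exfalso; move/isoP: ni; apply; split => // y yS; move: (h y); by rewrite yS.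
by apply/isoP => [[_ h]]; move: (h y yS); rewrite a.
Qed.

Lemma iso_sub (S : {set T}) : isolated adj S \subset S.
Proof. by apply/subsetP => v /isoP []. Qed.

Lemma core_sub (S : {set T}) : core adj S \subset S.
Proof. exact: subsetDl. Qed.

Lemma in_core_iso (S : {set T}) v : v \in S -> (v \in core adj S) = (v \notin isolated adj S).
Proof. by move=> vS; rewrite /core inE vS andbT. Qed.

Lemma sgU (A B : {set T}) : [disjoint A & B] -> sg (A :|: B) = sg A + sg B.
Proof.
move=> dAB; rewrite /sg -bigU //; apply: eq_bigl => v; by rewrite !inE.
Qed.

Lemma sg0 : sg set0 = 0.
Proof. by rewrite /sg big_set0. Qed.

Lemma sg1 v : sg [set v] = if black v then 1 else -1.
Proof. by rewrite /sg big_set1. Qed.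

Lemma credit_sg (S : {set T}) : credit black adj S = sg (isolated adj S).
Proof.
rewrite /credit /sg (bigID black) /=.
rewrite (eq_bigr (fun _ => 1)); last by move=> i /andP [_ ->].
rewrite [X in _ = _ + X](eq_bigr (fun _ => -1)); last by move=> i /andP [_ /negbTE ->].
rewrite (eq_bigl (fun i => i \in [set v in isolated adj S | black v])); last by move=> i; rewrite !inE.
rewrite [X in _ = _ + X](eq_bigl (fun i => i \in [set v in isolated adj S | ~~ black v])); last by move=> i; rewrite !inE.
by rewrite !sumr_const mulNrn !natz.
Qed.

Lemma Fv_set0 b : Fv b set0 = 0.
Proof.
rewrite /Fv.
have E : forall p : pred T, [set x in (set0 : {set T}) | p x] = set0.
  by move=> p; apply/setP => x; rewrite !inE.
by rewrite !E !enum_set0; case: b.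
Qed.

Lemma val_set0 b : gval b set0 = 0.
Proof.
rewrite val_unfold credit_sg.
have -> : isolated adj set0 = set0 by apply/setP => x; rewrite !inE.
have -> : core adj set0 = set0 by apply/setP => x; rewrite !inE.
by rewrite sg0 Fv_set0.
Qed.

Hypothesis Hsym : symmetric adj.
Hypothesis Hirr : irreflexive adj.
Hypothesis Hbip : forall u v, adj u v -> black u != black v.

Lemma core_nbr (S : {set T}) v : v \in core adj S -> exists2 y, y \in core adj S & adj v y.
Proof.
case/coreP => vS [y yS a]; exists y => //; apply/coreP; split => //.
by exists v; rewrite // Hsym.
Qed.

Lemma iso_core (S : {set T}) : isolated adj (core adj S) = set0.
Proof.
apply/setP => v; rewrite [RHS]inE; apply/negP => /isoP [vC h].
have [y yC a] := core_nbr vC; by move: (h y yC); rewrite a.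
Qed.

Lemma core_core (S : {set T}) : core adj (core adj S) = core adj S.
Proof. by rewrite [LHS]/core iso_core setD0. Qed.

Definition iscore (C : {set T}) := core adj C = C.

Lemma iscore_core (S : {set T}) : iscore (core adj S).
Proof. exact: core_core. Qed.

Lemma iscore_iso (C : {set T}) : iscore C -> isolated adj C = set0.
Proof. by move=> <-; rewrite iso_core. Qed.

Lemma val_core b (C : {set T}) : iscore C -> gval b C = Fv b C.
Proof. by move=> hC; rewrite val_unfold credit_sg iscore_iso // sg0 add0r hC. Qed.

Lemma core_empty (C : {set T}) : iscore C -> (forall v, v \in C -> black v) -> C = set0.
Proof.
move=> hC hb; apply/setP => v; rewrite inE; apply/negbTE/negP => vC.
have vC' := vC; move: vC'; rewrite -{1}hC => /core_nbr [y]; rewrite hC => yC a.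
by move: (Hbip a); rewrite (hb v vC) (hb y yC).
Qed.

Lemma core_empty' (C : {set T}) : iscore C -> (forall v, v \in C -> ~~ black v) -> C = set0.
Proof.
move=> hC hb; apply/setP => v; rewrite inE; apply/negbTE/negP => vC.
have vC' := vC; move: vC'; rewrite -{1}hC => /core_nbr [y]; rewrite hC => yC a.
by move: (Hbip a); rewrite (negbTE (hb v vC)) (negbTE (hb y yC)).
Qed.

Lemma val_iso b (X Y : {set T}) : Y \subset X ->
  (forall v y, v \in X :\: Y -> y \in X -> ~~ adj v y) ->
  gval b X = gval b Y + sg (X :\: Y).
Proof.
move=> YX hI.
have Ecore : core adj X = core adj Y.
  apply/setP => v; apply/coreP/coreP => [[vX [y yX a]]|[vY [y yY a]]].
  - have vY : v \in Y.
      apply/negPn/negP => vnY; move: (hI v y); rewrite inE vnY vX yX a => /(_ isT isT).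
      done.
    have yY : y \in Y.
      apply/negPn/negP => ynY; move: (hI y v); rewrite inE ynY yX vX Hsym a => /(_ isT isT).
      done.
    by split => //; exists y.
  - by split; [exact: (subsetP YX) | exists y => //; exact: (subsetP YX)].
have Eiso : isolated adj X = isolated adj Y :|: (X :\: Y).
  apply/setP => v; rewrite in_setU; apply/isoP/orP => [[vX h]|].
  - case vY: (v \in Y); last by right; rewrite inE vY vX.
    left; apply/isoP; split => // y yY; apply: h; exact: (subsetP YX).
  - case=> [/isoP [vY h]|vXY].
    + split; first exact: (subsetP YX).
      move=> y yX; case yY: (y \in Y); first exact: h.
      by rewrite Hsym; apply: hI; [rewrite inE yY yX | exact: (subsetP YX)].
    + by split; [move: vXY; rewrite inE => /andP [] | move=> y; exact: hI].
rewrite !val_unfold !credit_sg Ecore Eiso sgU; first by rewrite addrAC.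
rewrite -setI_eq0; apply/eqP/setP => v; rewrite !inE.
by case: (v \in Y); rewrite /= ?andbF.
Qed.



Lemma nonnil (s : seq int) z : z \in s -> s != [::].
Proof. by case: s. Qed.

Definition MonoUpTo n := forall (S : {set T}) w b, (#|S| <= n)%N -> w \in S -> ~~ black w ->
  gval b S <= gval b (S :\ w) + 1.

Lemma monoset n : MonoUpTo n -> forall (S W : {set T}) b, (#|S| <= n)%N -> W \subset S ->
  (forall w, w \in W -> ~~ black w) -> gval b S <= gval b (S :\: W) + (#|W|%N)%:Z.
Proof.
move=> H S W b; have [k hk] : exists k, #|W| = k by eexists.
elim: k W S hk => [|k IH] W S hW hS WS hw.
  have -> : W = set0 by apply/eqP; rewrite -cards_eq0 hW.
  by rewrite setD0 cards0 addr0.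
have [w wW] : exists w, w \in W by apply/set0Pn; rewrite -cards_eq0 hW.
have h1 := H S w b hS (subsetP WS w wW) (hw w wW).
have hk : #|W :\ w| = k by move: hW; rewrite (cardsD1 w W) wW; lia.
have hS' : (#|S :\ w| <= n)%N by move: hS; rewrite (cardsD1 w S) (subsetP WS w wW); lia.
have WS' : W :\ w \subset S :\ w by apply: setSD.
have hw' : forall v, v \in W :\ w -> ~~ black v by move=> v; rewrite inE => /andP [_ /hw].
have h2 := IH (W :\ w) (S :\ w) hk hS' WS' hw'.
have E : S :\ w :\: (W :\ w) = S :\: W.
  apply/setP => v; rewrite !inE; case: (eqVneq v w) => [->|] //=; by rewrite wW.
rewrite E hk in h2; rewrite hW; apply: le_trans h1 _; lia.
Qed.

Lemma ml n : MonoUpTo n -> forall (S : {set T}) x b, (#|S| <= n)%N -> x \in S -> black x ->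
  gval b S <= (#|closed_nbhd adj S x|%N)%:Z + gval b (S :\: closed_nbhd adj S x).
Proof.
move=> H S x b hS xS bx; set W := nbrs adj S x.
have WS : W \subset S by apply/subsetP => v; rewrite inE => /andP [].
have hw : forall w, w \in W -> ~~ black w.
  by move=> w; rewrite inE => /andP [_ /Hbip]; rewrite bx; case: (black w).
have h1 := monoset H b hS WS hw.
have E : gval b (S :\: W) = gval b (S :\: closed_nbhd adj S x) + 1.
  rewrite (@val_iso b (S :\: W) (S :\: closed_nbhd adj S x)).
  - congr (_ + _).
    have -> : S :\: W :\: (S :\: closed_nbhd adj S x) = [set x].
      apply/setP => v; rewrite !inE; case: (eqVneq v x) => [->|] /=; first by rewrite xS Hirr.
      by move=> _; case: (v \in S); case: (adj x v).
    by rewrite sg1 bx.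
  - by apply: setDS; apply/subsetP => v; rewrite in_N inE => ->; rewrite orbT.
  - move=> v y; rewrite !inE => /and3P [h1' h2' vS] /andP [hy yS].
    case: (eqVneq v x) => [->|vx]; first by rewrite yS in hy.
    by move: h1' h2'; rewrite vS (negbTE vx) /=; case: (adj x v).
have cN : #|closed_nbhd adj S x| = (#|W|).+1.
  by rewrite /closed_nbhd cardsU1 inE Hirr andbF.
rewrite cN; move: h1; rewrite E; lia.
Qed.

Lemma nz n : MonoUpTo n -> forall (S : {set T}), (#|S| <= n)%N -> gval false S <= gval true S.
Proof.
move=> H S hS; rewrite !val_unfold lerD2l; set C := core adj S.
have hC : iscore C by exact: iscore_core.
have hCn : (#|C| <= n)%N by apply: leq_trans (subset_leq_card (core_sub S)) hS.
case: (boolP [exists x in C, black x]) => [/exists_inP [x xC bx]|/exists_inPn hn].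
  have h2 : mvL C x <= Fv true C.
    by rewrite /Fv; apply: seqmax_ub; apply: map_f; rewrite mem_enum inE xC bx.
  rewrite -(val_core false hC); apply: le_trans h2; exact: (ml H false hCn xC bx).
by rewrite (core_empty' hC hn) !Fv_set0.
Qed.

Lemma mono_core n : MonoUpTo n -> forall (C : {set T}) w b, (#|C| <= n.+1)%N -> iscore C ->
  w \in C -> ~~ black w -> gval b C <= gval b (C :\ w) + 1.
Proof.
move=> H C w b hCn hC wC bw.
set T' := C :\ w; set C' := core adj T'; set U := isolated adj T'.
have ET : T' = C :\ w by []. have EC' : C' = core adj T' by [].
have EU : U = isolated adj T' by []. clearbody U C' T'.
have hTn : (#|T'| <= n)%N by move: hCn; rewrite ET (cardsD1 w C) wC; lia.
have C'T : C' \subset T' by rewrite EC'; exact: core_sub.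
have T'C : T' \subset C by rewrite ET; exact: subsetDl.
have wC' : w \notin C' by apply/negP => /(subsetP C'T); rewrite ET !inE eqxx.
have hcore : forall x y, x \in T' -> y \in T' -> adj x y -> y \in C'.
  by move=> x y xT yT a; rewrite EC'; apply/coreP; split => //; exists x => //; rewrite Hsym.
have hU : forall u, u \in U -> [/\ black u, adj u w & forall y, y \in C -> adj u y -> y = w].
  move=> u; rewrite EU => /isoP [uT hu].
  have hy : forall y, y \in C -> adj u y -> y = w.
    move=> y yC a; apply/eqP; apply/negPn/negP => yw.
    by move: (hu y); rewrite ET !inE yw yC a => /(_ isT).
  have uC : u \in C by apply: (subsetP T'C).
  move: uC; rewrite -{1}hC => /coreP [_ [y yC a]].
  have ey := hy y yC a; subst y.
  split => //; by move: (Hbip a); rewrite (negbTE bw); case: (black u).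
have UC' : forall u, u \in U -> u \notin C'.
  move=> u uU; have uU2 := uU; move: uU2; rewrite EU => /isoP [uT _].
  by rewrite EC' in_core_iso // negbK; move: uU; rewrite EU.
have sgU0 : 0 <= sg U.
  by rewrite /sg; apply: sumr_ge0 => v /hU [-> _ _].
have valT b' : gval b' T' = sg U + Fv b' C' by rewrite val_unfold credit_sg EU EC'.
have keyZ : forall x b', x \in C' ->
  gval b' ((C :\: closed_nbhd adj C' x) :\ w) = gval b' (C' :\: closed_nbhd adj C' x) + sg U.
  move=> x b' xC'.
  have NC' : closed_nbhd adj C' x \subset C'.
    by apply/subsetP => v; rewrite in_N => /orP [/eqP -> //|/andP []].
  rewrite (@val_iso b' ((C :\: closed_nbhd adj C' x) :\ w) (C' :\: closed_nbhd adj C' x)).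
  - congr (_ + _); congr sg; apply/setP => v; apply/idP/idP.
    + rewrite !in_setD !in_set1 => /andP [h /andP [vw /andP [vN vC]]].
      have vC'0 : v \notin C' by move: h; rewrite vN /=.
      have vT : v \in T' by rewrite ET in_setD1 vw vC.
      by move: vC'0; rewrite EC' in_core_iso // negbK EU.
    + move=> vU; have vT : v \in T' by move: vU; rewrite EU; apply: (subsetP (iso_sub T')).
      have vC'0 := UC' v vU.
      have vN : v \notin closed_nbhd adj C' x by apply/negP => /(subsetP NC'); rewrite (negbTE vC'0).
      by move: vT; rewrite ET !in_setD !in_set1 vN (negbTE vC'0) => /andP [-> ->].
  - apply/subsetP => v; rewrite !in_setD !in_set1 => /andP [vN vC'].
    have vT := subsetP C'T v vC'; move: vT; rewrite ET in_setD1 => /andP [vw vC].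
    by rewrite vw vN vC.
  - move=> v y; rewrite in_setD => /andP [vY vX] yX.
    move: vX; rewrite !in_setD !in_set1 => /andP [vw /andP [vN vC]].
    have vT : v \in T' by rewrite ET in_setD1 vw vC.
    have vU : v \in U.
      rewrite EU -(negbK (v \in isolated adj T')) -in_core_iso // -EC'.
      by move: vY; rewrite in_setD vN.
    move: vU; rewrite EU => /isoP [_ hv]; apply: hv.
    by move: yX; rewrite ET !in_setD !in_set1 => /andP [-> /andP [_ ->]].
rewrite (val_core b hC) valT.
case: b.
-
  have [y yC ay] : exists2 y, y \in C & adj w y by move: wC; rewrite -{1}hC => /core_nbr; rewrite hC.
  have by_ : black y by move: (Hbip ay); rewrite (negbTE bw); case: (black y).
  rewrite [Fv true C]/Fv; apply: seqmax_le.
    apply: (@nonnil _ (mvL C y)); apply: map_f; by rewrite mem_enum inE yC by_.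
  move=> z /mapP [x]; rewrite mem_enum inE => /andP [xC bx] ->.
  have xw : x != w by apply/eqP => e; move: bw; rewrite -e bx.
  have xT : x \in T' by rewrite ET !inE xw xC.
  case xC': (x \in C').
  + set Nx := closed_nbhd adj C' x.
    have hm : mvL C' x <= Fv true C'.
      by rewrite /Fv; apply: seqmax_ub; apply: map_f; rewrite mem_enum inE xC' bx.
    have wNx : w \notin Nx by rewrite in_N negb_or (negbTE wC') /= andbT; apply/eqP => e; move: xC'; rewrite -e (negbTE wC').
    have hN : forall y, y \in C -> adj x y -> y != w -> y \in C'.
      move=> y' y'C a yw; apply: (hcore x) => //; by rewrite ET !inE yw y'C.
    rewrite /mvL -/Nx.
    case axw: (adj x w).
    * have E : closed_nbhd adj C x = w |: Nx.
        apply/setP => v; rewrite !in_N in_setU1 in_N.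
        case: (eqVneq v w) => [->|vw] /=; first by rewrite wC axw orbT.
        case: (v == x) => //=; case vC: (v \in C) => /=.
          case a: (adj x v); last by rewrite andbF.
          by rewrite (hN v vC a vw).
        by case vC'': (v \in C') => //=; move: (subsetP T'C v (subsetP C'T v vC'')); rewrite vC.
      have E2 : C :\: (w |: Nx) = (C :\: Nx) :\ w.
        by apply/setP => v; rewrite !inE negb_or andbA.
      rewrite E E2 keyZ // cardsU1 wNx /mvL -/Nx in hm *.
      move: hm; slia.
    * have E : closed_nbhd adj C x = Nx.
        apply/setP => v; rewrite !in_N.
        case: (v == x) => //=; case vC: (v \in C) => /=.
          case a: (adj x v); last by rewrite andbF.
          have vw : v != w by apply/eqP => e; move: a; rewrite e axw.
          by rewrite (hN v vC a vw).
        by case vC'': (v \in C') => //=; move: (subsetP T'C v (subsetP C'T v vC'')); rewrite vC.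
      rewrite E.
      have hXn : (#|C :\: Nx| <= n)%N.
        have := @card_rm C' C x xC' (subset_trans C'T T'C); rewrite -/Nx.
        have : (#|C :\: Nx| < #|C|)%N.
          apply: proper_card; rewrite properE subsetDl /=; apply/subsetPn; exists x => //.
          by rewrite inE N_self.
        move: hCn; slia.
      have wX : w \in C :\: Nx by rewrite inE wNx wC.
      have h1 := H (C :\: Nx) w false hXn wX bw.
      rewrite keyZ // in h1.
      move: hm h1; rewrite /mvL -/Nx; slia.
  + have xU : x \in U.
      rewrite EU -(negbK (x \in isolated adj T')) -in_core_iso // -EC'; by rewrite xC'.
    have [_ axw hx] := hU x xU.
    have E : closed_nbhd adj C x = [set x; w].
      apply/setP => v; rewrite in_N !inE.
      case: (eqVneq v x) => [->|vx] //=; case vC: (v \in C) => /=.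
        case a: (adj x v).
          by rewrite (hx v vC a) eqxx.
        by apply/esym/eqP => e; move: a; rewrite e axw.
      by apply/esym/eqP => e; move: vC; rewrite e wC.
    have c2 : #|[set x; w]| = 2%N by rewrite cards2 xw.
    have E2 : C :\: [set x; w] = T' :\ x.
      by apply/setP => v; rewrite ET !inE negb_or andbA.
    rewrite /mvL E c2 E2.
    have h1 : gval false T' = gval false (T' :\ x) + 1.
      rewrite (@val_iso false T' (T' :\ x)).
      - have -> : T' :\: (T' :\ x) = [set x].
          apply/setP => v; rewrite !inE; case: (eqVneq v x) => [->|] /=; first by rewrite xT.
          by case: (v \in T').
        by rewrite sg1 bx.
      - exact: subsetDl.
      - move=> v y'; rewrite !inE => /andP [hv vT'] yT.
        have -> : v = x by apply/eqP; move: hv; rewrite vT' andbT negbK.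
        by move: xU; rewrite EU => /isoP [_ h]; apply: h.
    have h2 := nz H hTn; rewrite (valT true) in h2.
    rewrite -/(Fv true C'); move: h1 h2; slia.
-
  case: (boolP [exists y in C', ~~ black y]) => [/exists_inP [y0 y0C' by0]|/exists_inPn hn].
  + have hlist : [seq mvR C' y | y <- enum [set y in C' | ~~ black y]] != [::].
      apply: (@nonnil _ (mvR C' y0)); apply: map_f; by rewrite mem_enum inE y0C' by0.
    have := seqmin_mem hlist => /mapP [y]; rewrite mem_enum inE => /andP [yC' by_] Em.
    have EF : Fv false C' = mvR C' y by rewrite /Fv Em.
    rewrite EF.
    have yT : y \in T' := subsetP C'T y yC'.
    have yC : y \in C := subsetP T'C y yT.
    have h1 : Fv false C <= mvR C y.
      by rewrite /Fv; apply: seqmin_lb; apply: map_f; rewrite mem_enum inE yC by_.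
    apply: le_trans h1 _.
    set Ny := closed_nbhd adj C' y.
    have E : closed_nbhd adj C y = Ny.
      apply/setP => v; rewrite !in_N.
      case: (v == y) => //=; case vC: (v \in C) => /=.
        case a: (adj y v); last by rewrite andbF.
        have vw : v != w.
          apply/eqP => e; move: (Hbip a); by rewrite e (negbTE by_) (negbTE bw).
        by rewrite (hcore y v yT) // ET !inE vw vC.
      by case vC'': (v \in C') => //=; move: (subsetP T'C v (subsetP C'T v vC'')); rewrite vC.
    have wNy : w \notin Ny by rewrite in_N negb_or (negbTE wC') /= andbT; apply/eqP => e; move: yT; rewrite -e ET !inE eqxx.
    have hXn : (#|C :\: Ny| <= n)%N.
      have : (#|C :\: Ny| < #|C|)%N.
        apply: proper_card; rewrite properE subsetDl /=; apply/subsetPn; exists y => //.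
        by rewrite inE N_self.
      move: hCn; slia.
    have wX : w \in C :\: Ny by rewrite inE wNy wC.
    have h2 := H (C :\: Ny) w true hXn wX bw.
    rewrite keyZ // in h2.
    rewrite /mvR E -/Ny; move: h2; rewrite -/Ny; slia.
  + have C'0 : C' = set0.
      apply: core_empty; first by rewrite EC'; exact: iscore_core.
      by move=> v /hn; rewrite negbK.
    rewrite C'0 Fv_set0 addr0.
    have h1 : Fv false C <= mvR C w.
      by rewrite /Fv; apply: seqmin_lb; apply: map_f; rewrite mem_enum inE wC bw.
    apply: le_trans h1 _.
    have E : C :\: closed_nbhd adj C w = set0.
      apply/setP => v; rewrite in_setD in_N in_set0; case: (eqVneq v w) => //= vw.
      case vC: (v \in C); rewrite /= ?andbF //.
      have vT : v \in T' by rewrite ET !inE vw vC.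
      have vU : v \in U.
        rewrite EU -(negbK (v \in isolated adj T')) -in_core_iso // -EC' C'0 inE //.
      have [_ avw _] := hU v vU.
      by rewrite Hsym avw.
    rewrite /mvR E val_set0; move: sgU0; slia.
Qed.


Lemma mono_step n : MonoUpTo n -> MonoUpTo n.+1.
Proof.
move=> H S w b hS wS bw.
case wi: (w \in isolated adj S).
  rewrite (@val_iso b S (S :\ w)).
  - have -> : S :\: (S :\ w) = [set w].
      apply/setP => v; rewrite !inE; case: (eqVneq v w) => [->|] /=; first by rewrite wS.
      by case: (v \in S).
    rewrite sg1 (negbTE bw); move: (gval b (S :\ w)) => a; slia.
  - exact: subsetDl.
  - move=> v y; rewrite !inE => /andP [hv vS] yS.
    have -> : v = w by apply/eqP; move: hv; rewrite vS andbT negbK.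
    by move: wi => /isoP [_ h]; apply: h.
have wC : w \in core adj S by rewrite in_core_iso // wi.
have hC := iscore_core S.
have h1 : gval b S = gval b (core adj S) + sg (S :\: core adj S).
  apply: val_iso; first exact: core_sub.
  move=> v y; rewrite in_setD => /andP [vC vS] yS.
  have : v \in isolated adj S by move: vC; rewrite in_core_iso // negbK.
  by move=> /isoP [_ h]; apply: h.
have h2 : gval b (S :\ w) = gval b (core adj S :\ w) + sg (S :\: core adj S).
  have -> : S :\: core adj S = (S :\ w) :\: (core adj S :\ w).
    apply/setP => v; rewrite !in_setD !in_set1; case: (eqVneq v w) => [->|] //=.
    by rewrite wi wS.
  apply: val_iso; first exact: setSD (core_sub S).
  move=> v y; rewrite in_setD => /andP [h vSw] ySw.
  move: vSw; rewrite in_setD1 => /andP [vw vS]; move: ySw; rewrite in_setD1 => /andP [yw yS].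
  have : v \in isolated adj S by move: h; rewrite in_setD1 vw /= in_core_iso // negbK.
  by move=> /isoP [_ h']; apply: h'.
have hCn : (#|core adj S| <= n.+1)%N by apply: leq_trans (subset_leq_card (core_sub S)) hS.
have h3 := mono_core H b hCn hC wC bw.
rewrite h1 h2; move: h3; slia.
Qed.

Lemma mono_all n : MonoUpTo n.
Proof.
elim: n => [|n IH]; last exact: mono_step.
move=> S w b hS wS; exfalso.
by move: hS; rewrite leqn0 cards_eq0 => /eqP S0; move: wS; rewrite S0 inE.
Qed.

Lemma mono (S : {set T}) w b : w \in S -> ~~ black w -> gval b S <= gval b (S :\ w) + 1.
Proof. exact: (@mono_all #|S| S w b (leqnn _)). Qed.

Lemma nonzug (S : {set T}) : gval false S <= gval true S.
Proof. exact: (@nz #|S| (@mono_all #|S|) S (leqnn _)). Qed.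

Lemma mlL (S : {set T}) x b : x \in S -> black x ->
  gval b S <= (#|closed_nbhd adj S x|%N)%:Z + gval b (S :\: closed_nbhd adj S x).
Proof. exact: (@ml #|S| (@mono_all #|S|) S x b (leqnn _)). Qed.

End Game.


Lemma credit_neg (T : finType) (black : T -> bool) (adj : rel T) (S : {set T}) :
  credit (fun v => ~~ black v) adj S = - credit black adj S.
Proof.
rewrite /credit.
have -> : [set v in isolated adj S | ~~ ~~ black v] = [set v in isolated adj S | black v].
  by apply/setP => v; rewrite !inE negbK.
by rewrite opprB.
Qed.

Lemma bi_value_neg (T : finType) (black : T -> bool) (adj : rel T) n (b : bool) (S : {set T}) :
  bi_value (fun v => ~~ black v) adj n b S = - bi_value black adj n (~~ b) S.
Proof.
elim: n b S => [|n IH] b S; cbn [bi_value]; first by rewrite !addr0 credit_neg.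
rewrite credit_neg [RHS]opprD; congr (_ + _); case: b.
- rewrite -seqmax_opp -map_comp; congr seqmax; apply: eq_map => x /=.
  by rewrite IH /= opprD opprK.
- have -> : [set y in core adj S | ~~ ~~ black y] = [set y in core adj S | black y].
    by apply/setP => v; rewrite !inE negbK.
  rewrite -seqmin_opp -map_comp; congr seqmin; apply: eq_map => x /=.
  by rewrite IH /= opprD.
Qed.

Lemma val_neg (T : finType) (black : T -> bool) (adj : rel T) (b : bool) (S : {set T}) :
  gval (fun v => ~~ black v) adj b S = - gval black adj (~~ b) S.
Proof. exact: bi_value_neg. Qed.

Section Main.
Variables (T : finType) (adj : rel T) (P : {set T}) (phi : T -> T).
Hypothesis Hsym : symmetric adj.
Hypothesis Hirr : irreflexive adj.
Hypothesis Hinv : involutive phi.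
Hypothesis Hauto : forall u v, adj (phi u) (phi v) = adj u v.
Hypothesis HP : forall v, v \in P -> phi v \in P.
Hypothesis Hcross : forall u v, adj u v -> (u \in P) = (v \in P).
Hypothesis Hdist : forall v, v \in P ->
  [/\ phi v != v, ~~ adj v (phi v) & forall w, ~~ (adj v w && adj w (phi v))].

Definition ColOK (black : T -> bool) :=
  (forall u v, adj u v -> black u != black v) /\ (forall v, v \in P -> black (phi v) = ~~ black v).
Definition symset (Q : {set T}) := forall v, v \in Q -> v \in P -> phi v \in Q.
Definition Claim n := forall black, ColOK black -> forall b (Q : {set T}),
  (#|Q| <= n)%N -> symset Q -> gval black adj b Q = gval black adj b (Q :\: P).

Lemma phi_inj : injective phi.
Proof. exact: inv_inj. Qed.

Lemma mem_phi (A : {set T}) v : (v \in phi @: A) = (phi v \in A).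
Proof.
apply/imsetP/idP => [[u uA ->]|h]; first by rewrite Hinv.
by exists (phi v); rewrite ?Hinv.
Qed.

Lemma symset_phi (Q : {set T}) v : symset Q -> v \in P -> (phi v \in Q) = (v \in Q).
Proof.
move=> hQ vP; apply/idP/idP => [h|h]; last exact: hQ.
by rewrite -(Hinv v); apply: hQ => //; apply: HP.
Qed.

Lemma crossP u v : adj u v -> u \in P -> v \in P.
Proof. by move=> a uP; rewrite -(Hcross a). Qed.

Lemma crossN u v : adj u v -> u \notin P -> v \notin P.
Proof. by move=> a uP; rewrite -(Hcross a). Qed.

Lemma core_split (Q : {set T}) : core adj (Q :\: P) = core adj Q :\: P.
Proof.
apply/setP => v; rewrite [RHS]in_setD.
case vP: (v \in P) => /=.
  by apply/negbTE/negP => /coreP [] ; rewrite in_setD vP.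
apply/coreP/coreP => [[vQ [y yQ a]]|[vQ [y yQ a]]].
  by split; [move: vQ; rewrite in_setD => /andP [] | exists y => //; move: yQ; rewrite in_setD => /andP []].
split; first by rewrite in_setD vP.
by exists y => //; rewrite in_setD yQ andbT; apply: (crossN a); rewrite vP.
Qed.

Lemma iso_split (Q : {set T}) : isolated adj Q :\: P = isolated adj (Q :\: P).
Proof.
apply/setP => v; rewrite [LHS]in_setD.
case vP: (v \in P) => /=.
  by apply/esym/negbTE/negP => /isoP []; rewrite in_setD vP.
apply/isoP/isoP => [[vQ h]|[vQ h]].
  split; first by rewrite in_setD vP.
  by move=> y; rewrite in_setD => /andP [_ /h].
split; first by move: vQ; rewrite in_setD => /andP [].
move=> y yQ; apply/negP => a; move: (h y); rewrite in_setD yQ andbT.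
by rewrite (crossN a) ?vP // => /(_ isT); rewrite a.
Qed.

Section Col.
Variable black : T -> bool.
Hypothesis Hcol : ColOK black.

Lemma Hbip : forall u v, adj u v -> black u != black v.
Proof. by case: Hcol. Qed.

Lemma Hflip : forall v, v \in P -> black (phi v) = ~~ black v.
Proof. by case: Hcol. Qed.

Lemma sym_sg0 (Z : {set T}) : Z \subset P -> symset Z -> sg black Z = 0.
Proof.
move=> ZP hZ.
have E : sg black Z = - sg black Z.
  rewrite {1}/sg (reindex_inj phi_inj) /= /sg -sumrN.
  apply: eq_big => v.
    case vP: (v \in P); first exact: symset_phi.
    have pvP : phi v \notin P by apply/negP => /HP; rewrite Hinv vP.
    by rewrite (negbTE (contra (subsetP ZP _) pvP)) (negbTE (contra (subsetP ZP v) (negbT vP))).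
  move=> vZ.
  have vP : v \in P by rewrite -(Hinv v); apply: HP; apply: (subsetP ZP).
  by rewrite Hflip //; case: (black v); rewrite ?opprK.
move: E; move: (sg black Z) => s; lia.
Qed.

Lemma credit_split (Q : {set T}) : symset Q -> credit black adj Q = credit black adj (Q :\: P).
Proof.
move=> hQ; rewrite !credit_sg -iso_split.
rewrite -{1}(setID (isolated adj Q) P) sgU; last first.
  by rewrite disjoints_subset; apply/subsetP => v; rewrite in_setI in_setC in_setD => /andP [_ ->].
rewrite sym_sg0 ?add0r //; first exact: subsetIr.
move=> v; rewrite in_setI => /andP [vI vP] _; rewrite in_setI HP // andbT.
move: vI => /isoP [vQ h]; apply/isoP; split; first exact: hQ.
move=> y yQ; apply/negP => a.
have yP : y \in P by apply: (crossP a); apply: HP.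
move: (h (phi y) (hQ y yQ yP)); by rewrite -Hauto Hinv a.
Qed.

Lemma symset_core (Q : {set T}) : symset Q -> symset (core adj Q).
Proof.
move=> hQ v /coreP [vQ [y yQ a]] vP; apply/coreP; split; first exact: hQ.
exists (phi y); first by apply: hQ => //; exact: (crossP a).
by rewrite Hauto.
Qed.

Lemma mirror (C : {set T}) x : iscore adj C -> symset C -> x \in C -> x \in P -> black x ->
  mvL black adj C x <= gval black adj true (C :\: closed_nbhd adj C x :\: phi @: closed_nbhd adj C x).
Proof.
move=> hC sC xC xP bx.
rewrite /mvL.
set Nx := closed_nbhd adj C x; set X1 := C :\: Nx; set C1 := core adj X1; set Ny := phi @: Nx.
have ENx : Nx = closed_nbhd adj C x by []. have EX1 : X1 = C :\: Nx by [].
have EC1 : C1 = core adj X1 by []. have ENy : Ny = phi @: Nx by [].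
clearbody Ny C1 X1 Nx.
have [dx1 dx2 dx3] := Hdist xP.
have pxC : phi x \in C by apply: sC.
have inX1 : forall v, (v \in X1) = (v != x) && ~~ ((v \in C) && adj x v) && (v \in C).
  by move=> v; rewrite EX1 in_setD ENx in_N negb_or.
have pxX1 : phi x \in X1 by rewrite inX1 dx1 pxC negb_and dx2 orbT.
have nbX1 : forall v, v \in C -> adj (phi x) v -> v \in X1.
  move=> v vC a; rewrite inX1 vC andbT /=; apply/andP; split.
    by apply/eqP => e; move: a; rewrite e Hsym (negbTE dx2).
  apply/negP => a2; move: (dx3 v); by rewrite a2 Hsym a.
have pxC1 : phi x \in C1.
  have [z zC az] : exists2 z, z \in C & adj x z.
    by move: xC; rewrite -{1}hC => /(core_nbr Hsym); rewrite hC.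
  have zP : z \in P := crossP az xP.
  rewrite EC1; apply/coreP; split => //; exists (phi z); last by rewrite Hauto.
  by apply: nbX1; [apply: sC | rewrite Hauto].
have EA : closed_nbhd adj C1 (phi x) = Ny.
  apply/setP => v; rewrite ENy mem_phi in_N ENx in_N.
  have -> : (phi v == x) = (v == phi x).
    by apply/eqP/eqP => [<-|->]; rewrite Hinv.
  case: (eqVneq v (phi x)) => //= vpx.
  rewrite -(Hauto x) Hinv.
  case a: (adj (phi x) v); rewrite ?andbF //= !andbT.
  have vP : v \in P by apply: (crossP a); apply: HP.
  rewrite (symset_phi sC vP) EC1.
  apply/idP/idP => [/coreP [] |vC]; first by rewrite inX1 => /andP [].
  by apply/coreP; split; [exact: nbX1 | exists (phi x) => //; rewrite Hsym].
have NyC1 : Ny \subset C1.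
  apply/subsetP => v; rewrite -EA in_N => /orP [/eqP -> //|/andP []] //.
have cNy : #|Ny| = #|Nx| by rewrite ENy card_imset //; exact: phi_inj.
have C1X1 : C1 \subset X1 by rewrite EC1; exact: core_sub.
have inC1 : forall v, v \in X1 -> (v \in C1) = (v \notin isolated adj X1).
  by move=> v vX1; rewrite EC1 in_core_iso.
have h1 : gval black adj false X1 <= credit black adj X1 + mvR black adj C1 (phi x).
  rewrite val_unfold lerD2l -EC1 /Fv; apply: seqmin_lb; apply: map_f.
  by rewrite mem_enum inE pxC1 Hflip // bx.
have XE : C :\: Nx :\: Ny = X1 :\: Ny by rewrite EX1.
have h2 : gval black adj true (X1 :\: Ny) = gval black adj true (C1 :\: Ny) + sg black (isolated adj X1).
  rewrite (@val_iso _ _ _ Hsym true (X1 :\: Ny) (C1 :\: Ny)).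
  - congr (_ + _); congr sg; apply/setP => v.
    apply/idP/idP => [|vI].
      rewrite in_setD => /andP [h]; rewrite in_setD => /andP [vNy vX1].
      move: h; rewrite in_setD vNy /= => vC1.
      by move: vC1; rewrite inC1 // negbK.
    have vX1 : v \in X1 by move: vI => /isoP [].
    have vC1 : v \notin C1 by rewrite inC1 // negbK.
    have vNy : v \notin Ny by apply/negP => /(subsetP NyC1); rewrite (negbTE vC1).
    by rewrite !in_setD vNy vX1 (negbTE vC1).
  - apply/subsetP => v; rewrite in_setD => /andP [vNy vC1].
    by rewrite in_setD vNy (subsetP C1X1 v vC1).
  - move=> v y; rewrite in_setD => /andP [h vY] yY.
    have vX1 : v \in X1 by move: vY; rewrite in_setD => /andP [].
    have yX1 : y \in X1 by move: yY; rewrite in_setD => /andP [].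
    have vNy : v \notin Ny by move: vY; rewrite in_setD => /andP [].
    have vC1 : v \notin C1 by move: h; rewrite in_setD vNy.
    by move: vC1; rewrite inC1 // negbK => /isoP [_ hv]; apply: hv.
rewrite h2.
move: h1; rewrite /mvR EA cNy credit_sg.
move: (gval black adj true (C1 :\: Ny)) (sg black (isolated adj X1)) (gval black adj false X1) => a1 a2 a3.
move: (#|Nx|%:Z) => c; lia.
Qed.

Lemma Fv_noblack (C : {set T}) : (forall v, v \in C -> ~~ black v) -> Fv black adj true C = 0.
Proof.
move=> h; rewrite /Fv.
have -> : [set x in C | black x] = set0.
  by apply/setP => v; rewrite !inE; apply/negbTE/negP => /andP [/h /negbTE ->].
by rewrite enum_set0.
Qed.

Variable n : nat.
Hypothesis IH : Claim n.

Lemma hmove (C : {set T}) x : (#|C| <= n.+1)%N -> symset C -> x \in C -> x \notin P ->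
  mvL black adj C x = mvL black adj (C :\: P) x.
Proof.
move=> hn sC xC xP.
have EN : closed_nbhd adj C x = closed_nbhd adj (C :\: P) x.
  apply/setP => v; rewrite !in_N in_setD.
  case: (v == x) => //=; case a: (adj x v); rewrite ?andbF ?andbT //.
  by rewrite (crossN a xP).
rewrite /mvL EN; congr (_ + _).
set N := closed_nbhd adj (C :\: P) x.
have NP : forall v, v \in N -> v \notin P.
  by move=> v; rewrite in_N => /orP [/eqP -> //|/andP [_ a]]; apply: (crossN a).
have xN : x \in N by exact: N_self.
rewrite (IH Hcol).
- congr gval; apply/setP => v; rewrite !in_setD; by case: (v \in P); case: (v \in N).
- have : (#|C :\: N| < #|C|)%N.
    apply: proper_card; rewrite properE subsetDl /=; apply/subsetPn; exists x => //.
    by rewrite in_setD xN.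
  move: hn; slia.
- move=> v; rewrite in_setD => /andP [vN vC] vP; rewrite in_setD (sC v vC vP) andbT.
  by apply/negP => /NP; rewrite HP.
Qed.

Lemma half1 (C : {set T}) : (#|C| <= n.+1)%N -> iscore adj C -> symset C ->
  Fv black adj true C <= Fv black adj true (C :\: P).
Proof.
move=> hn hC sC.
have hCP : iscore adj (C :\: P) by rewrite /iscore core_split hC.
case: (boolP [exists x in C, black x]) => [/exists_inP [x0 x0C bx0]|/exists_inPn hnb]; last first.
  rewrite !Fv_noblack //; first by move=> v; rewrite in_setD => /andP [_ /hnb].
rewrite [Fv _ _ true C]/Fv; apply: seqmax_le.
  by apply: (@nonnil _ (mvL black adj C x0)); apply: map_f; rewrite mem_enum inE x0C bx0.
move=> z /mapP [x]; rewrite mem_enum inE => /andP [xC bx] ->.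
case xP: (x \in P); last first.
  rewrite (hmove hn sC xC (negbT xP)) /Fv; apply: seqmax_ub; apply: map_f.
  by rewrite mem_enum inE in_setD xP xC bx.
apply: (le_trans (mirror hC sC xC xP bx)).
set Nx := closed_nbhd adj C x.
have NxP : forall v, v \in Nx -> v \in P.
  by move=> v; rewrite in_N => /orP [/eqP -> //|/andP [_ a]]; apply: (crossP a).
rewrite (IH Hcol).
- have -> : C :\: Nx :\: phi @: Nx :\: P = C :\: P.
    apply/setP => v; rewrite !in_setD mem_phi.
    case vP: (v \in P) => //=.
    have -> : (v \in Nx) = false by apply/negbTE/negP => /NxP; rewrite vP.
    have -> : (phi v \in Nx) = false.
      by apply/negbTE/negP => /NxP /HP; rewrite Hinv vP.
    by [].
  by rewrite (val_core _ Hsym).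
- have : (#|C :\: Nx :\: phi @: Nx| < #|C|)%N.
    apply: proper_card; rewrite properE; apply/andP; split.
      by apply: subset_trans (subsetDl _ _) (subsetDl _ _).
    apply/subsetPn; exists x => //; by rewrite !in_setD N_self andbF.
  move: hn; slia.
- move=> v; rewrite !in_setD mem_phi => /andP [h1 /andP [h2 vC]] vP.
  by rewrite mem_phi Hinv h2 h1 (sC v vC vP).
Qed.

End Col.

Lemma ColOK_neg black : ColOK black -> ColOK (fun v => ~~ black v).
Proof.
case=> hb hf; split => [u v /hb|v /hf ->] //.
by case: (black u); case: (black v).
Qed.

Lemma leftEq n : Claim n -> forall black, ColOK black -> forall C : {set T},
  (#|C| <= n.+1)%N -> iscore adj C -> symset C ->
  Fv black adj true C = Fv black adj true (C :\: P).
Proof.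
move=> IH black Hcol C hn hC sC.
have hCP : iscore adj (C :\: P) by rewrite /iscore core_split hC.
apply/eqP; rewrite eq_le (half1 Hcol IH hn hC sC) andTb.
case: (boolP [exists x in C :\: P, black x]) => [/exists_inP [x0 x0C bx0]|/exists_inPn hnb].
  rewrite [Fv _ _ true (C :\: P)]/Fv; apply: seqmax_le.
    by apply: (@nonnil _ (mvL black adj (C :\: P) x0)); apply: map_f; rewrite mem_enum inE x0C bx0.
  move=> z /mapP [x]; rewrite mem_enum inE => /andP [xC bx] ->.
  move: xC; rewrite in_setD => /andP [xP xC].
  rewrite -(hmove Hcol IH hn sC xC xP) /Fv; apply: seqmax_ub; apply: map_f.
  by rewrite mem_enum inE xC bx.
have CP0 : C :\: P = set0 by apply: (core_empty' Hsym (Hbip Hcol) hCP).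
rewrite CP0 Fv_set0.
case: (boolP [exists x in C, black x]) => [/exists_inP [x xC bx]|/exists_inPn hnc]; last first.
  by rewrite Fv_noblack.
have h1 : mvL black adj C x <= Fv black adj true C.
  by rewrite /Fv; apply: seqmax_ub; apply: map_f; rewrite mem_enum inE xC bx.
have h2 := mlL Hsym Hirr (Hbip Hcol) false xC bx.
rewrite (val_core _ Hsym false hC) in h2.
have h3 := half1 (ColOK_neg Hcol) IH hn hC sC.
rewrite CP0 Fv_set0 -(val_core _ Hsym true hC) val_neg /= (val_core _ Hsym false hC) in h3.
apply: le_trans h1; apply: le_trans h2; move: h3; move: (Fv black adj false C) => a; lia.
Qed.

Lemma claim_step n : Claim n -> Claim n.+1.
Proof.
move=> IH black Hcol b Q hQ sQ.
rewrite !val_unfold (credit_split Hcol sQ) core_split; congr (_ + _).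
set C := core adj Q.
have hC : iscore adj C by exact: iscore_core.
have hCP : iscore adj (C :\: P) by rewrite /iscore core_split hC.
have sC : symset C by exact: symset_core.
have hn : (#|C| <= n.+1)%N by apply: leq_trans (subset_leq_card (core_sub adj Q)) hQ.
case: b; first exact: (leftEq IH Hcol hn hC sC).
have E := leftEq IH (ColOK_neg Hcol) hn hC sC.
rewrite -(val_core _ Hsym true hC) -(val_core _ Hsym true hCP) !val_neg /= in E.
rewrite -(val_core _ Hsym false hC) -(val_core _ Hsym false hCP).
by apply: oppr_inj.
Qed.

Lemma claim_all n : Claim n.
Proof.
elim: n => [|n IH]; last exact: claim_step.
move=> black _ b Q hQ _.
have -> : Q = set0 by apply/eqP; rewrite -cards_eq0 -leqn0.
by rewrite set0D.
Qed.

Lemma main_sym black : ColOK black -> forall b (Q : {set T}), symset Q ->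
  gval black adj b Q = gval black adj b (Q :\: P).
Proof. by move=> Hcol b Q sQ; apply: (@claim_all #|Q| black Hcol b Q (leqnn _) sQ). Qed.

End Main.


Lemma seqmax_eq_mem (s1 s2 : seq int) : (forall z, (z \in s1) = (z \in s2)) -> seqmax s1 = seqmax s2.
Proof.
move=> h; case: s1 h => [|a1 t1] h.
  case: s2 h => [|a2 t2] h //; by move: (h a2); rewrite in_nil inE eqxx.
have n1 : a1 :: t1 != [::] by [].
have n2 : s2 != [::] by apply: (@nonnil _ a1); rewrite -h inE eqxx.
apply/eqP; rewrite eq_le; apply/andP; split.
  by apply: seqmax_ub; rewrite -h; apply: seqmax_mem.
by apply: seqmax_ub; rewrite h; apply: seqmax_mem.
Qed.

Lemma seqmin_eq_mem (s1 s2 : seq int) : (forall z, (z \in s1) = (z \in s2)) -> seqmin s1 = seqmin s2.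
Proof.
move=> h; case: s1 h => [|a1 t1] h.
  case: s2 h => [|a2 t2] h //; by move: (h a2); rewrite in_nil inE eqxx.
have n1 : a1 :: t1 != [::] by [].
have n2 : s2 != [::] by apply: (@nonnil _ a1); rewrite -h inE eqxx.
apply/eqP; rewrite eq_le; apply/andP; split.
  by apply: seqmin_lb; rewrite h; apply: seqmin_mem.
by apply: seqmin_lb; rewrite -h; apply: seqmin_mem.
Qed.

Section Emb.
Variables (T1 T2 : finType) (b1 : T1 -> bool) (a1 : rel T1) (b2 : T2 -> bool) (a2 : rel T2).
Variable f : T1 -> T2.
Hypothesis finj : injective f.
Hypothesis fcol : forall v, b2 (f v) = b1 v.
Hypothesis fadj : forall u v, a2 (f u) (f v) = a1 u v.

Lemma nbrs_img (S : {set T1}) x : nbrs a2 (f @: S) (f x) = f @: nbrs a1 S x.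
Proof.
apply/setP => y; apply/idP/idP.
  rewrite inE => /andP [/imsetP [u uS ->] a]; apply: imset_f; by rewrite inE uS -fadj a.
move/imsetP => [u]; rewrite inE => /andP [uS a] ->; by rewrite inE imset_f // fadj a.
Qed.

Lemma closed_img (S : {set T1}) x : closed_nbhd a2 (f @: S) (f x) = f @: closed_nbhd a1 S x.
Proof. by rewrite /closed_nbhd imsetU1 nbrs_img. Qed.

Lemma imsetD_inj (A B : {set T1}) : f @: (A :\: B) = f @: A :\: f @: B.
Proof.
apply/setP => z; apply/idP/idP.
  by move/imsetP => [u]; rewrite in_setD => /andP [uB uA] ->; rewrite in_setD !mem_imset // uB uA.
rewrite in_setD => /andP [zB /imsetP [u uA e]]; subst z.
by rewrite mem_imset // in_setD uA andbT; move: zB; rewrite mem_imset.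
Qed.

Lemma iso_img (S : {set T1}) : isolated a2 (f @: S) = f @: isolated a1 S.
Proof.
apply/setP => z; apply/idP/idP.
  rewrite inE => /andP [/imsetP [u uS ->]]; rewrite nbrs_img imset_eq0 => h.
  by rewrite mem_imset // inE uS h.
move/imsetP => [u]; rewrite inE => /andP [uS h] ->.
by rewrite inE mem_imset // uS nbrs_img imset_eq0 h.
Qed.

Lemma core_img (S : {set T1}) : core a2 (f @: S) = f @: core a1 S.
Proof. by rewrite /core iso_img imsetD_inj. Qed.

Lemma sg_img (I : {set T1}) : sg b2 (f @: I) = sg b1 I.
Proof.
rewrite /sg big_imset /=; last by move=> u v _ _; apply: finj.
by apply: eq_bigr => v _; rewrite fcol.
Qed.

Lemma gval_img b0 (S0 : {set T1}) : gval b2 a2 b0 (f @: S0) = gval b1 a1 b0 S0.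
Proof.
suff H : forall m b (S : {set T1}), (#|S| <= m)%N -> gval b2 a2 b (f @: S) = gval b1 a1 b S.
  exact: (H #|S0|).
elim=> [|m IH] b S hS.
  have -> : S = set0 by apply/eqP; rewrite -cards_eq0 -leqn0.
  by rewrite imset0 !val_set0.
rewrite !val_unfold !credit_sg iso_img sg_img core_img; congr (_ + _).
set C := core a1 S.
have CS : C \subset S by exact: core_sub.
have mvLE : forall x, x \in C -> mvL b2 a2 (f @: C) (f x) = mvL b1 a1 C x.
  move=> x xC; rewrite /mvL closed_img card_imset // -imsetD_inj IH //.
  have := card_rm a1 xC CS; move: hS; slia.
have mvRE : forall x, x \in C -> mvR b2 a2 (f @: C) (f x) = mvR b1 a1 C x.
  move=> x xC; rewrite /mvR closed_img card_imset // -imsetD_inj IH //.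
  have := card_rm a1 xC CS; move: hS; slia.
case: b; rewrite /Fv.
- apply: seqmax_eq_mem => z; apply/mapP/mapP => [[y]|[x]].
    rewrite mem_enum inE => /andP [/imsetP [x xC ->] bx] ->.
    by exists x; rewrite ?mvLE // mem_enum inE xC -fcol bx.
  rewrite mem_enum inE => /andP [xC bx] ->.
  by exists (f x); rewrite ?mvLE // mem_enum inE mem_imset // xC fcol bx.
- apply: seqmin_eq_mem => z; apply/mapP/mapP => [[y]|[x]].
    rewrite mem_enum inE => /andP [/imsetP [x xC ->] bx] ->.
    by exists x; rewrite ?mvRE // mem_enum inE xC -fcol bx.
  rewrite mem_enum inE => /andP [xC bx] ->.
  by exists (f x); rewrite ?mvRE // mem_enum inE mem_imset // xC fcol bx.
Qed.

End Emb.


Definition phiZ (V V' : finType) (phi : V -> V) (z : V + V') : V + V' :=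
  match z with inl v => inl (phi v) | inr v => inr v end.

Lemma mainTheorem10_aux (V : finType) (black : V -> bool) (adj : rel V)
    (phi : V -> V) :
  is_bigraph black adj -> BW_automorphism black adj phi ->
  is_zero black adj /\ Ls black adj = 0%R /\ Rs black adj = 0%R.
Proof.
move=> [Hsym [Hirr Hbip]] [Hauto [Hinv [Hflip Hd]]].
have Hdist : forall v, v \in [set: V] ->
    [/\ phi v != v, ~~ adj v (phi v) & forall w, ~~ (adj v w && adj w (phi v))].
  move=> v _; have [h1 [h2 h3]] := Hd v; split => //; first by rewrite eq_sym.
  by move=> w; apply/negP => h; move/negP: h3; apply; apply/existsP; exists w.
have HG : forall b, gval black adj b setT = 0.
  move=> b.
  have HPT : forall v, v \in [set: V] -> phi v \in [set: V] by move=> v _; rewrite in_setT.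
  have HcrossT : forall u v, adj u v -> (u \in [set: V]) = (v \in [set: V]) by move=> u v _; rewrite !in_setT.
  have HcolT : ColOK adj [set: V] phi black by split.
  have HsT : symset [set: V] phi [set: V] by move=> v _ _; rewrite in_setT.
  rewrite (@main_sym V adj setT phi Hsym Hirr Hinv Hauto HPT HcrossT Hdist black HcolT b setT HsT).
  by rewrite setDv val_set0.
split; last by split; apply: HG.
move=> V' black' adj' [Hsym' [Hirr' Hbip']].
set bZ := sum_black black black'; set aZ := sum_adj adj adj'.
set P : {set V + V'} := [set z | if z is inl _ then true else false].
have HsymZ : symmetric aZ by case=> u [] v //=; apply: Hsym.
have HirrZ : irreflexive aZ by case=> u /=.
have HinvZ : involutive (@phiZ V V' phi) by case=> u /=; rewrite ?Hinv.
have HautoZ : forall u v, aZ (@phiZ V V' phi u) (@phiZ V V' phi v) = aZ u v by case=> u [] v //=.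
have HPZ : forall v, v \in P -> @phiZ V V' phi v \in P by case=> u; rewrite !inE.
have HcrossZ : forall u v, aZ u v -> (u \in P) = (v \in P) by case=> u [] v; rewrite !inE.
have HdistZ : forall v, v \in P -> [/\ @phiZ V V' phi v != v, ~~ aZ v (@phiZ V V' phi v)
    & forall w, ~~ (aZ v w && aZ w (@phiZ V V' phi v))].
  case=> u; rewrite inE // => _.
  have [h1 h2 h3] := Hdist u (in_setT u); split => //=.
  by case=> w //=; apply: h3.
have HcolZ : ColOK aZ P (@phiZ V V' phi) bZ.
  split; first by case=> u [] v //=; [apply: Hbip | apply: Hbip'].
  by case=> u; rewrite inE //= => _; apply: Hflip.
have HsymsetT : symset P (@phiZ V V' phi) [set: V + V'] by move=> v _ _; rewrite in_setT.
have Einr : [set: V + V'] :\: P = inr @: [set: V'].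
  apply/setP; case=> u; rewrite in_setD !inE /=.
    by apply/esym/negbTE/imsetP => [[w _]].
  by rewrite mem_imset ?in_setT //; move=> x y [].
have key : forall b, gval bZ aZ b [set: V + V'] = gval black' adj' b [set: V'].
  move=> b; rewrite (main_sym HsymZ HirrZ HinvZ HautoZ HPZ HcrossZ HdistZ HcolZ b HsymsetT).
  rewrite Einr; apply: gval_img => //; by move=> x y [].
by split; rewrite /Ls /Rs; [apply: (key true) | apply: (key false)].
Qed.

Theorem mainTheorem10 (V : finType) (black : V -> bool) (adj : rel V)
    (phi : V -> V) :
  is_bigraph black adj -> BW_automorphism black adj phi ->
  is_zero black adj /\ Ls black adj = 0%R /\ Rs black adj = 0%R.
Proof. exact: mainTheorem10_aux. Qed.
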